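(* Let $R$ be a ring with a complete, separated Zariskian filtration $w:R\to\mathbb{Z}\cup\{\infty\}$, let $(\sigma,\delta)$ be a skew derivation on $R$ compatible with $w$, and let $S=R^b[[x;\sigma,\delta]]$. Let $I$ be a closed ideal of $R$ with $\sigma(I)\subseteq I$ and $\delta(I)\subseteq I$, and let $(\overline\sigma,\overline\delta)$ be the induced skew derivation of $R/I$. Then $(\overline\sigma,\overline\delta)$ is compatible with the quotient filtration $\overline w(r+I)=\sup\{w(r+y):y\in I\}$. Moreover the closure $\overline{IS}$ of $IS$ in $S$ (with respect to $f_w$) is a two-sided ideal of $S$, and $S/\overline{IS}\cong(R/I)^b[[x;\overline\sigma,\overline\delta]]$.
   Context: Filtrations $u$ satisfy $u(0)=\infty$, $u(x+y)\ge\min$, $u(xy)\ge u(x)+u(y)$, are separated and descending with level sets $F_nR=\{u\ge n\}$; Zariskian means the Rees ring $\bigoplus_nF_nR\,t^{-n}$ is Noetherian and $F_1R\subseteq J(F_0R)$ ($R/I$ is complete with respect to $\overline w$). A skew derivation is $(\sigma,\delta)$ with $\sigma$ an automorphism and $\delta(ab)=\delta(a)b+\sigma(a)\delta(b)$; it is compatible with $u$ if $\deg_u(\sigma-\mathrm{id})>0$ and $\deg_u(\delta)>0$, where $\deg_u(d)=\inf_{x\ne0}\{u(d(x))-u(x)\}$. For complete $(R,u)$ and compatible $(\sigma,\delta)$, $R^b[[x;\sigma,\delta]]$ is the ring of series $\sum_{n\ge0}r_nx^n$ with $u(r_n)+\tfrac12n\to\infty$, with multiplication extending $xa=\sigma(a)x+\delta(a)$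 continuously and $R$-linearly, filtered by $f_u(\sum r_ix^i)=\inf_i\{u(r_i)+\tfrac12i\}$. *)

(* Defs.v *)
(* Filtration values Z ∪ {∞} are modelled in \bar int
   (constructive_ereal); -oo is excluded by the definition of a wfiltration. *)
From HB Require Import structures.
From mathcomp Require Import all_boot all_order all_algebra.
From mathcomp Require Import constructive_ereal.
From Stdlib Require Import ClassicalEpsilon.

Set Implicit Arguments.
Unset Strict Implicit.
Unset Printing Implicit Defensive.

Import Order.TTheory GRing.Theory Num.Theory.
Local Open Scope ring_scope.

Section Defs.
Variable A : pzRingType.
Implicit Types (u : A -> \bar int) (x y : A).

Definition wfiltration u : Prop :=
  [/\ u 0 = +oo%E,
      (forall x, u x != -oo%E),
      (forall x y, (Order.min (u x) (u y) <= u (x + y)%R)%E) &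
      (forall x y, (u x + u y <= u (x * y)%R)%E)].

Definition wseparated u : Prop := forall x, u x = +oo%E -> x = 0.

Definition Flevel u (n : int) x : Prop := (n%:E <= u x)%E.

Definition fconv u (s : nat -> A) (l : A) : Prop :=
  forall N : int, exists n0 : nat, forall n, (n0 <= n)%N -> Flevel u N (s n - l).

Definition fcauchy u (s : nat -> A) : Prop :=
  forall N : int, exists n0 : nat, forall m n, (n0 <= m)%N -> (n0 <= n)%N ->
    Flevel u N (s m - s n).

Definition wcomplete u : Prop :=
  forall s, fcauchy u s -> exists l, fconv u s l.

(* Rees ring  (+)_n F_nR t^{-n}: elements are finitely supported a : int -> A
   with a n ∈ F_n R (a n is the coefficient of t^{-n}). *)
Definition rees_el u (a : int -> A) : Prop :=
  (exists N : nat, forall n : int, (N < absz n)%N -> a n = 0) /\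
  (forall n, Flevel u n (a n)).

Definition supp_bound (a : int -> A) : nat :=
  epsilon (inhabits 0%N) (fun N : nat => forall n : int, (N < absz n)%N -> a n = 0).

(* product in the Rees ring: (ab)_n = sum_{i+j=n} a_i b_j *)
Definition rees_mul (a b : int -> A) (n : int) : A :=
  \sum_(i < (supp_bound a).*2.+1)
     a (i%:Z - (supp_bound a)%:Z) * b (n - (i%:Z - (supp_bound a)%:Z)).

Definition rees_lideal u (L : (int -> A) -> Prop) : Prop :=
  [/\ (forall a, L a -> rees_el u a), L (fun _ => 0),
      (forall a b, L a -> L b -> L (fun n => a n - b n)) &
      (forall r a, rees_el u r -> L a -> L (rees_mul r a))].

Definition rees_rideal u (L : (int -> A) -> Prop) : Prop :=
  [/\ (forall a, L a -> rees_el u a), L (fun _ => 0),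
      (forall a b, L a -> L b -> L (fun n => a n - b n)) &
      (forall r a, rees_el u r -> L a -> L (rees_mul a r))].

Definition rees_lfg u (L : (int -> A) -> Prop) : Prop :=
  exists (k : nat) (g : 'I_k -> int -> A), (forall j, L (g j)) /\
    forall a, L a -> exists r : 'I_k -> int -> A, (forall j, rees_el u (r j)) /\
      a = (fun n => \sum_(j < k) rees_mul (r j) (g j) n).

Definition rees_rfg u (L : (int -> A) -> Prop) : Prop :=
  exists (k : nat) (g : 'I_k -> int -> A), (forall j, L (g j)) /\
    forall a, L a -> exists r : 'I_k -> int -> A, (forall j, rees_el u (r j)) /\
      a = (fun n => \sum_(j < k) rees_mul (g j) (r j) n).

Definition rees_noetherian u : Prop :=
  (forall L, rees_lideal u L -> rees_lfg u L) /\
  (forall L, rees_rideal u L -> rees_rfg u L).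

Definition F0_lideal u (M : A -> Prop) : Prop :=
  [/\ (forall x, M x -> Flevel u 0 x), M 0,
      (forall x y, M x -> M y -> M (x - y)) &
      (forall y x, Flevel u 0 y -> M x -> M (y * x))].

Definition F0_max_lideal u (M : A -> Prop) : Prop :=
  [/\ F0_lideal u M, ~ M 1 &
      forall N, F0_lideal u N -> ~ N 1 -> (forall x, M x -> N x) ->
        forall x, N x -> M x].

Definition jacobson_F0 u x : Prop :=
  Flevel u 0 x /\ forall M, F0_max_lideal u M -> M x.

Definition zariskian u : Prop :=
  rees_noetherian u /\ (forall x, Flevel u 1 x -> jacobson_F0 u x).

(* deg_u(d) > 0, where deg_u(d) = inf_{x<>0} (u(d x) - u(x)) *)
Definition deg_pos u (d : A -> A) : Prop :=
  exists c : int, 0 < c /\ forall x, x != 0 -> (u x + c%:E <= u (d x))%E.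

Definition compatible u (sigma delta : A -> A) : Prop :=
  deg_pos u (fun x => sigma x - x) /\ deg_pos u delta.

(* A series sum_n r_n x^n is represented by its coefficient sequence r. *)

(* u(r_n) + n/2 -> oo   (stated as 2 u(r_n) + n -> oo) *)
Definition bseq u (r : nat -> A) : Prop :=
  forall N : int, exists n0 : nat, forall n, (n0 <= n)%N ->
    ((2 * N)%:E <= u (r n) + u (r n) + (n%:Z)%:E)%E.

(* x^n a = sum_{i <= n} skc n i a x^i, from x a = sigma(a) x + delta(a) *)
Fixpoint skc (sigma delta : A -> A) (n : nat) : nat -> A -> A :=
  match n with
  | 0%N => fun i a => if i == 0%N then a else 0
  | n'.+1 => fun i a =>
      (if i is j.+1 then sigma (skc sigma delta n' j a) else 0)
      + delta (skc sigma delta n' i a)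
  end.

(* the u-adic sum of a series in A (a limit of partial sums; separatedness
   makes it unique when it exists) *)
Definition fsum u (s : nat -> A) : A :=
  epsilon (inhabits 0) (fun l => fconv u (fun N => \sum_(n < N) s n) l).

Definition skmul u (sigma delta : A -> A) (f g : nat -> A) (k : nat) : A :=
  \sum_(m < k.+1) fsum u (fun n => f n * skc sigma delta n (k - m) (g m)).

Definition skadd (f g : nat -> A) : nat -> A := fun k => f k + g k.
Definition skone : nat -> A := fun k => if k == 0%N then 1 else 0.
Definition skzero : nat -> A := fun _ => 0.
Definition skconst (a : A) : nat -> A := fun k => if k == 0%N then a else 0.

(* f_u(h) >= N, i.e. u(h_i) + i/2 >= N for all i *)
Definition fnear u (h : nat -> A) (N : int) : Prop :=
  forall i, ((2 * N)%:E <= u (h i) + u (h i) + (i%:Z)%:E)%E.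

Definition sclosure u (X : (nat -> A) -> Prop) (f : nat -> A) : Prop :=
  bseq u f /\ forall N : int, exists g, X g /\ fnear u (fun i => f i - g i) N.

Definition IS_set u (sigma delta : A -> A) (I : A -> Prop) (f : nat -> A) : Prop :=
  exists (k : nat) (a : 'I_k -> A) (s : 'I_k -> nat -> A),
    (forall j, I (a j) /\ bseq u (s j)) /\
    f = (fun n => \sum_(j < k) skmul u sigma delta (skconst (a j)) (s j) n).

Definition s_ideal u (sigma delta : A -> A) (X : (nat -> A) -> Prop) : Prop :=
  [/\ (forall f, X f -> bseq u f), X skzero,
      (forall f g, X f -> X g -> X (fun k => f k - g k)) &
      (forall h f, bseq u h -> X f ->
          X (skmul u sigma delta h f) /\ X (skmul u sigma delta f h))].

Definition ring_ideal (I : A -> Prop) : Prop :=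
  [/\ I 0, (forall x y, I x -> I y -> I (x - y)) &
      (forall a x, I x -> I (a * x) /\ I (x * a))].

Definition wclosed u (I : A -> Prop) : Prop :=
  forall x, (forall N : int, exists y, I y /\ Flevel u N (x - y)) -> I x.

End Defs.

Definition is_lub (X : \bar int -> Prop) (v : \bar int) : Prop :=
  (forall e, X e -> (e <= v)%E) /\ (forall b, (forall e, X e -> (e <= b)%E) -> (v <= b)%E).

(* ring isomorphism S / X ≅ T, stated via a surjective ring morphism with kernel X *)
Definition skiso (A B : pzRingType) (uA : A -> \bar int) (sA dA : A -> A)
  (uB : B -> \bar int) (sB dB : B -> B) (X : (nat -> A) -> Prop) : Prop :=
  exists phi : (nat -> A) -> (nat -> B),
  [/\ (forall f, bseq uA f -> bseq uB (phi f)),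
      (forall g, bseq uB g -> exists f, bseq uA f /\ phi f = g) &
  [/\ (forall f g, bseq uA f -> bseq uA g -> phi (skadd f g) = skadd (phi f) (phi g)),
      (forall f g, bseq uA f -> bseq uA g ->
          phi (skmul uA sA dA f g) = skmul uB sB dB (phi f) (phi g)),
      phi (@skone A) = @skone B &
       (forall f, bseq uA f -> (phi f = @skzero B <-> X f))]].

(* Main.v *)
Require Import Defs.
From HB Require Import structures.
From mathcomp Require Import all_boot all_order all_algebra.
From mathcomp Require Import constructive_ereal.
From mathcomp Require Import zify.
From Stdlib Require Import ClassicalEpsilon FunctionalExtensionality.
Set Implicit Arguments. Unset Strict Implicit. Unset Printing Implicit Defensive.
Import Order.TTheory GRing.Theory Num.Theory.
Local Open Scope ring_scope.

Section Filt.
Variable R : pzRingType.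
Variable w : R -> \bar int.
Hypothesis hw : wfiltration w.

Definition Q (x : R) (K : int) : Prop := (K%:E <= w x + w x)%E.

Lemma wfin x : w x != -oo%E.
Proof. by case: hw => _ h _ _; apply: h. Qed.

Lemma Q0 K : Q 0 K.
Proof. by case: hw => h _ _ _; rewrite /Q h /= leey. Qed.

Lemma Qmono x K K' : (K' <= K)%R -> Q x K -> Q x K'.
Proof. rewrite /Q => h1 h2; apply: le_trans h2; by rewrite lee_fin. Qed.

Lemma Qmul x y a b : Q x a -> Q y b -> Q (x * y) (a + b).
Proof.
case: hw => _ _ _ hm; move: (hm x y) (wfin x) (wfin y) (wfin (x*y)); rewrite /Q.
case: (w x) => [u||]; case: (w y) => [v||]; case: (w (x*y)) => [t||] //=;
rewrite ?lee_fin ?leey //; move=> *; lia.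
Qed.
Lemma Qadd x y K : Q x K -> Q y K -> Q (x + y) K.
Proof.
case: hw => _ _ ha _; move: (ha x y); rewrite /Q => hm hx hy.
have [h|h] := leP (w x) (w y).
  rewrite (min_l h) in hm; apply: le_trans hx _; exact: leeD.
rewrite (min_r (ltW h)) in hm; apply: le_trans hy _; exact: leeD.
Qed.

Lemma Qbot x : exists K, Q x K.
Proof.
move: (wfin x); rewrite /Q; case: (w x) => [u||] // _.
  by exists (u + u); rewrite lee_fin.
by exists 0; rewrite leey.
Qed.

Lemma Qinf x : (forall K, Q x K) -> w x = +oo%E.
Proof.
move: (wfin x); rewrite /Q; case: (w x) => [u||] // _ h.
by move: (h (u + u + 1)); rewrite lee_fin; lia.
Qed.

Lemma Qsep x : wseparated w -> (forall K, Q x K) -> x = 0.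
Proof. by move=> hs h; apply: hs; apply: Qinf. Qed.

Lemma PQ n x : Flevel w n x <-> Q x (2 * n).
Proof.
rewrite /Flevel /Q; move: (wfin x); case: (w x) => [u||] // _; rewrite ?lee_fin ?leey //.
split; lia.
Qed.

Lemma bQ x N (i : nat) :
  ((2 * N)%:E <= w x + w x + (i%:Z)%:E)%E <-> Q x (2 * N - i%:Z).
Proof.
rewrite /Q; move: (wfin x); case: (w x) => [u||] // _; rewrite ?lee_fin ?leey //.
split; lia.
Qed.

Lemma Qneg_ex : exists c, (c <= 0)%R /\ forall x K, Q x K -> Q (- x) (K + c).
Proof.
have [c hc] := Qbot (-1).
exists (Order.min c 0); split; first by rewrite ge_min lexx orbT.
move=> x K hx; rewrite -mulN1r addrC; apply: Qmul => //.
apply: Qmono hc; by rewrite ge_min lexx.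
Qed.

Lemma Qsum (I : Type) (r : seq I) (P : pred I) (F : I -> R) K :
  (forall i, P i -> Q (F i) K) -> Q (\sum_(i <- r | P i) F i) K.
Proof.
move=> h; apply: (big_ind (fun z => Q z K)); [exact: Q0| move=> ? ?; exact: Qadd| exact: h].
Qed.

Hypothesis hsep : wseparated w.
Hypothesis hcomp : wcomplete w.

Definition qconv (s : nat -> R) l :=
  forall K, exists n0, forall n, (n0 <= n)%N -> Q (s n - l) K.

Definition tinf (t : nat -> R) :=
  forall K, exists n0, forall n, (n0 <= n)%N -> Q (t n) K.

Lemma fconv_q s l : fconv w s l <-> qconv s l.
Proof.
split=> h K.
  have [n0 hn] := h `|K|%:Z; exists n0 => n /hn /PQ; apply: Qmono; lia.
have [n0 hn] := h (2 * K); exists n0 => n /hn /PQ //.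
Qed.

Lemma qconv_uniq s l l' : qconv s l -> qconv s l' -> l = l'.
Proof.
have [c [hc0 hc]] := Qneg_ex => h1 h2; apply/eqP; rewrite -subr_eq0; apply/eqP.
apply: (Qsep hsep) => K.
have [n1 hn1] := h1 (K - c); have [n2 hn2] := h2 K.
have e : l - l' = (s (maxn n1 n2) - l') + - (s (maxn n1 n2) - l) by rewrite opprB [RHS]addrC addrA subrK.
rewrite e; apply: Qadd; first by apply: hn2; rewrite leq_maxr.
have := hc _ _ (hn1 (maxn n1 n2) (leq_maxl _ _)); by rewrite subrK.
Qed.

Lemma diff_sum (t : nat -> R) n m : (n <= m)%N ->
  \sum_(i < m) t i - \sum_(i < n) t i = \sum_(n <= i < m) t i.
Proof.
move=> h; rewrite -!(big_mkord xpredT) (@big_cat_nat _ _ _ n 0 m _ _ (leq0n n) h) /=.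
by rewrite addrAC subrr add0r.
Qed.

Lemma series_conv (t : nat -> R) : tinf t ->
  exists l, fconv w (fun N => \sum_(n < N) t n) l.
Proof.
move=> ht; apply: hcomp => N.
have [c [hc0 hc]] := Qneg_ex.
have [n0 hn0] := ht (2 * N - c); exists n0 => m n hm hn; apply/PQ.
have key : forall a b, (n0 <= a)%N -> (a <= b)%N ->
    Q (\sum_(i < b) t i - \sum_(i < a) t i) (2 * N - c).
  move=> a b ha hab; rewrite diff_sum // big_nat_cond; apply: Qsum => i.
  move=> /andP[/andP[h1 _] _]; apply: hn0; exact: leq_trans ha h1.
have [hnm|hmn] := leqP n m.
  by apply: Qmono (key _ _ hn hnm); lia.
have := hc _ _ (key _ _ hm (ltnW hmn)); rewrite opprB; apply: Qmono; lia.
Qed.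

Lemma fsum_spec (t : nat -> R) : tinf t ->
  fconv w (fun N => \sum_(n < N) t n) (fsum w t).
Proof. by move=> /series_conv h; rewrite /fsum; apply: epsilon_spec. Qed.

Lemma fsum_eq (t : nat -> R) l : tinf t ->
  fconv w (fun N => \sum_(n < N) t n) l -> fsum w t = l.
Proof.
move=> ht hl; apply: (@qconv_uniq (fun N => \sum_(n < N) t n)); apply/fconv_q => //.
exact: fsum_spec.
Qed.

Lemma fsum_Q (t : nat -> R) K : tinf t -> (forall n, Q (t n) K) -> Q (fsum w t) K.
Proof.
move=> ht hK; have /fconv_q hs := fsum_spec ht.
have [c [hc0 hc]] := Qneg_ex.
have [n0 hn0] := hs (K - c).
have := hc _ _ (hn0 n0 (leqnn _)); rewrite subrK => h.
have -> : fsum w t = \sum_(n < n0) t n + - (\sum_(n < n0) t n - fsum w t).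
  by rewrite opprB addrC subrK.
by apply: Qadd => //; apply: Qsum.
Qed.

Lemma fsum_single (t : nat -> R) : (forall n, (0 < n)%N -> t n = 0) -> fsum w t = t 0%N.
Proof.
move=> h.
have ht : tinf t by move=> K; exists 1%N => n hn; rewrite h //; exact: Q0.
apply: fsum_eq => // N; exists 1%N => n hn; apply/PQ.
case: n hn => // n _; rewrite big_ord_recl big1 ?addr0 ?subrr; first exact: Q0.
by move=> i _; apply: h.
Qed.

Lemma Qshift x y (c : int) K : (w x + c%:E <= w y)%E -> Q x K -> Q y (K + 2 * c).
Proof.
rewrite /Q; move: (wfin x) (wfin y).
case: (w x) => [u||]; case: (w y) => [v||] //=; rewrite ?lee_fin ?leey //; move=> *; lia.
Qed.

Variables (sigma : {rmorphism R -> R}) (delta : {additive R -> R}).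
Hypothesis hcompat : compatible w sigma delta.

Lemma Qsigma x K : Q x K -> Q (sigma x) K.
Proof.
move=> hx; case: hcompat => [[c [hc0 hc]] _].
have [->|nz] := eqVneq x 0; first by rewrite rmorph0; exact: Q0.
have h := Qshift (hc x nz) hx.
have -> : sigma x = (sigma x - x) + x by rewrite subrK.
apply: Qadd => //; apply: Qmono h; lia.
Qed.

Lemma Qdelta x K : Q x K -> Q (delta x) (K + 2).
Proof.
move=> hx; case: hcompat => [_ [c [hc0 hc]]].
have [->|nz] := eqVneq x 0; first by rewrite raddf0; exact: Q0.
have h := Qshift (hc x nz) hx; apply: Qmono h; lia.
Qed.

Lemma skc_Q a K n i : Q a K -> Q (skc sigma delta n i a) (K + 2 * n%:Z - 2 * i%:Z).
Proof.
move=> ha; elim: n i => [|n IH] [|i] /=.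
- by apply: Qmono ha; lia.
- exact: Q0.
- rewrite add0r; apply: Qmono (Qdelta (IH 0%N)); lia.
- apply: Qadd; first by apply: Qmono (Qsigma (IH i)); lia.
  apply: Qmono (Qdelta (IH i.+1)); lia.
Qed.

Lemma skc_gt a n i : (n < i)%N -> skc sigma delta n i a = 0.
Proof.
elim: n i => [|n IH] [|i] //= hi.
by rewrite IH // IH ?rmorph0 ?raddf0 ?addr0 // ltnW.
Qed.

Definition bseqQ (f : nat -> R) :=
  forall K, exists n0, forall n, (n0 <= n)%N -> Q (f n) (K - n%:Z).

Lemma bseq_Q f : Defs.bseq w f <-> bseqQ f.
Proof.
split=> h K.
  have [n0 hn] := h `|K|%:Z; exists n0 => n /hn /bQ; apply: Qmono; lia.
have [n0 hn] := h (2 * K); exists n0 => n /hn hq; exact/bQ.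
Qed.

Lemma bseq_lower f : bseqQ f -> exists A, forall n, Q (f n) (A - n%:Z).
Proof.
move=> hf; have [n0 hn0] := hf 0.
have : forall m, exists A, forall n, (n < m)%N -> Q (f n) (A - n%:Z).
  elim=> [|m [A hA]]; first by exists 0.
  have [B hB] := Qbot (f m).
  exists (A - `|A|%:Z - `|B + m%:Z|%:Z) => n; rewrite ltnS leq_eqVlt => /orP[/eqP->|/hA].
    by apply: Qmono hB; lia.
  by apply: Qmono; lia.
move=> /(_ n0) [A hA]; exists (A - `|A|%:Z) => n.
have [hn|hn] := ltnP n n0; first by apply: Qmono (hA _ hn); lia.
by apply: Qmono (hn0 _ hn); lia.
Qed.

Lemma term_tinf f g k (m : nat) : bseqQ f ->
  tinf (fun n => f n * skc sigma delta n (k - m) (g m)).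
Proof.
move=> hf K; have [B hB] := Qbot (g m).
have [n0 hn0] := hf (K - B + 2 * (k - m)%:Z); exists n0 => n hn.
apply: Qmono (Qmul (hn0 n hn) (skc_Q n (k - m) hB)); lia.
Qed.

Lemma skmul_bseq f g : Defs.bseq w f -> Defs.bseq w g -> Defs.bseq w (skmul w sigma delta f g).
Proof.
move=> /bseq_Q hf /bseq_Q hg; apply/bseq_Q => K.
have [Af hAf] := bseq_lower hf; have [Ag hAg] := bseq_lower hg.
pose T := `|K|%:Z + `|Af|%:Z + `|Ag|%:Z.
have [n0 hn0] := hf T; have [m0 hm0] := hg T.
exists (n0 + m0)%N => k hk; rewrite /skmul; apply: Qsum => m _.
apply: fsum_Q; first exact: term_tinf.
move=> n; have [hlt|hge] := ltnP n (k - m).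
  by rewrite skc_gt // mulr0; exact: Q0.
have hmk : (m <= k)%N by rewrite -ltnS.
have hq : forall a b, Q (f n) (a - n%:Z) -> Q (g m) (b - m%:Z) ->
    (K <= a + b)%R -> Q (f n * skc sigma delta n (k - m) (g m)) (K - k%:Z).
  move=> a b ha hb hab; apply: Qmono (Qmul ha (skc_Q n (k - m) hb)).
  move: hge hmk hab; lia.
have [h1|h1] := leqP n0 n.
  apply: (hq T Ag (hn0 _ h1) (hAg m)); lia.
have h2 : (m0 <= m)%N by move: hk hge h1 hmk; lia.
apply: (hq Af T (hAf n) (hm0 _ h2)); lia.
Qed.

Variable I : R -> Prop.
Hypothesis hI : ring_ideal I.
Hypothesis hIc : wclosed w I.
Hypothesis hIs : forall a, I a -> I (sigma a).
Hypothesis hId : forall a, I a -> I (delta a).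

Lemma I0 : I 0. Proof. by case: hI. Qed.
Lemma IB x y : I x -> I y -> I (x - y). Proof. by case: hI => _ h _; apply: h. Qed.
Lemma IN x : I x -> I (- x). Proof. by move=> h; rewrite -sub0r; apply: IB => //; exact: I0. Qed.
Lemma ID x y : I x -> I y -> I (x + y).
Proof. by move=> hx hy; rewrite -[y]opprK; apply: IB => //; exact: IN. Qed.
Lemma IMl a x : I x -> I (a * x). Proof. by case: hI => _ _ h hx; exact: (h a x hx).1. Qed.
Lemma IMr a x : I x -> I (x * a). Proof. by case: hI => _ _ h hx; exact: (h a x hx).2. Qed.
Lemma Isum (J : Type) (r : seq J) (P : pred J) (F : J -> R) :
  (forall i, P i -> I (F i)) -> I (\sum_(i <- r | P i) F i).
Proof. by move=> h; apply: (big_ind I); [exact: I0 | exact: ID | exact: h]. Qed.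

Lemma skc_I a n i : I a -> I (skc sigma delta n i a).
Proof.
move=> ha; elim: n i => [|n IH] [|i] //=.
- exact: I0.
- by rewrite add0r; apply: hId.
- by apply: ID; [apply: hIs|apply: hId].
Qed.

Lemma fsum_I t : tinf t -> (forall n, I (t n)) -> I (fsum w t).
Proof.
move=> ht hI'; apply: hIc => N.
have /fconv_q hs := fsum_spec ht.
have [c [hc0 hc]] := Qneg_ex.
have [n0 hn0] := hs (2 * N - c); exists (\sum_(n < n0) t n); split.
  by apply: Isum.
apply/PQ; have := hc _ _ (hn0 n0 (leqnn _)); rewrite opprB subrK //.
Qed.

Lemma skmul_I_right h f k : bseqQ h -> (forall n, I (f n)) -> I (skmul w sigma delta h f k).
Proof.
move=> hh hf; apply: Isum => m _; apply: fsum_I; first exact: term_tinf.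
by move=> n; apply: IMl; apply: skc_I.
Qed.

Lemma skmul_I_left f h k : bseqQ f -> (forall n, I (f n)) -> I (skmul w sigma delta f h k).
Proof.
move=> hh hf; apply: Isum => m _; apply: fsum_I; first exact: term_tinf.
by move=> n; apply: IMr.
Qed.

Lemma skmul_const a s k :
  skmul w sigma delta (skconst a) s k = \sum_(m < k.+1) a * skc sigma delta 0 (k - m) (s m).
Proof.
apply: eq_bigr => m _; rewrite fsum_single //.
by move=> [|n] // _; rewrite /skconst /= mul0r.
Qed.

Lemma IS_I g : IS_set w sigma delta I g -> forall n, I (g n).
Proof.
move=> [k [a [s [hj ->]]]] n; apply: Isum => j _; rewrite skmul_const.
apply: Isum => m _; apply: IMr; exact: (hj j).1.
Qed.

Definition ej (j : nat) : nat -> R := fun k => if k == j then 1 else 0.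

Lemma ej_bseq j : Defs.bseq w (ej j).
Proof.
apply/bseq_Q => K; exists j.+1 => n hn; rewrite /ej.
have -> : (n == j) = false by apply/negbTE; rewrite neq_ltn hn orbT.
exact: Q0.
Qed.

Lemma skmul_ej a j k : skmul w sigma delta (skconst a) (ej j) k = if k == j then a else 0.
Proof.
rewrite skmul_const big_ord_recr /= subnn /= big1 ?add0r.
  by rewrite /ej; case: (k == j); rewrite ?mulr1 ?mulr0.
move=> m _ /=; have -> : (k - m == 0)%N = false.
  by apply/negbTE; rewrite subn_eq0 -ltnNge ltn_ord.
by rewrite mulr0.
Qed.

Lemma sum_delta (x : nat -> R) (k n0 : nat) :
  \sum_(j < n0) (if k == j :> nat then x j else 0) = if (k < n0)%N then x k else 0.
Proof.
elim: n0 => [|n0 IH]; first by rewrite big_ord0.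
rewrite big_ord_recr /= IH ltnS.
case: (ltngtP k n0) => h.
- by rewrite addr0.
- by rewrite addr0.
- by rewrite add0r h.
Qed.

Lemma Xchar f : sclosure w (IS_set w sigma delta I) f <-> Defs.bseq w f /\ forall i, I (f i).
Proof.
split.
  move=> [hb hn]; split=> // i; apply: hIc => M.
  have [g [hg hfn]] := hn (M + i%:Z); exists (g i); split; first exact: IS_I.
  apply/PQ; move: (hfn i) => /bQ; apply: Qmono; lia.
move=> [hb hi]; split=> // N.
have /bseq_Q hq := hb; have [n0 hn0] := hq (2 * N).
pose g := fun n => \sum_(j < n0) skmul w sigma delta (skconst (f j)) (ej j) n.
exists g; split.
  exists n0, (fun j : 'I_n0 => f j), (fun j : 'I_n0 => ej j); split => //.
  by move=> j; split; [exact: hi| exact: ej_bseq].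
move=> i; apply/bQ; rewrite /g.
under eq_bigr do rewrite skmul_ej.
rewrite (sum_delta (fun j => f j)).
case: ltnP => h; first by rewrite subrr; exact: Q0.
by rewrite subr0; apply: hn0.
Qed.

Lemma bseq_sub f g : Defs.bseq w f -> Defs.bseq w g -> Defs.bseq w (fun k => f k - g k).
Proof.
move=> /bseq_Q hf /bseq_Q hg; apply/bseq_Q => K.
have [c [hc0 hc]] := Qneg_ex.
have [n1 h1] := hf K; have [n2 h2] := hg (K - c).
exists (maxn n1 n2) => n hn.
have hn1 : (n1 <= n)%N by move: hn; rewrite geq_max => /andP[].
have hn2 : (n2 <= n)%N by move: hn; rewrite geq_max => /andP[].
apply: Qadd; first exact: h1.
apply: Qmono (hc _ _ (h2 n hn2)); lia.
Qed.

Lemma X_ideal : s_ideal w sigma delta (sclosure w (IS_set w sigma delta I)).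
Proof.
split.
- by move=> f /Xchar [].
- apply/Xchar; split; last by move=> i; exact: I0.
  by apply/bseq_Q => K; exists 0%N => n _; exact: Q0.
- move=> f g /Xchar [hf hf'] /Xchar [hg hg']; apply/Xchar; split.
    exact: bseq_sub.
  by move=> i; apply: IB.
- move=> h f hh /Xchar [hf hf']; split; apply/Xchar; split.
  + exact: skmul_bseq.
  + by move=> i; apply: skmul_I_right => //; apply/bseq_Q.
  + exact: skmul_bseq.
  + by move=> i; apply: skmul_I_left => //; apply/bseq_Q.
Qed.


Variable RI : pzRingType.
Variable wbar : RI -> \bar int.
Variable pi : {rmorphism R -> RI}.
Variables (sigmab deltab : RI -> RI).
Hypothesis hsurj : forall z : RI, exists r : R, pi r = z.
Hypothesis hker : forall r, pi r = 0 <-> I r.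
Hypothesis hlub : forall r, is_lub (fun e => exists y, I y /\ e = w (r + y)) (wbar (pi r)).
Hypothesis hsb : forall r, sigmab (pi r) = pi (sigma r).
Hypothesis hdb : forall r, deltab (pi r) = pi (delta r).

Lemma LUB1 r y : I y -> (w (r + y) <= wbar (pi r))%E.
Proof. by move=> hy; case: (hlub r) => h _; apply: h; exists y. Qed.

Lemma wbar_ge r : (w r <= wbar (pi r))%E.
Proof. by have := LUB1 r I0; rewrite addr0. Qed.

Lemma wbar_nfin z : wbar z != -oo%E.
Proof.
have [r <-] := hsurj z; have := wbar_ge r; move: (wfin r).
by case: (w r) => [u||] //; case: (wbar (pi r)).
Qed.

Lemma LUB2 r (N : int) : (N%:E <= wbar (pi r))%E -> exists y, I y /\ ((N - 1)%:E <= w (r + y))%E.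
Proof.
move=> hN; apply: Classical_Prop.NNPP => hn.
have : (wbar (pi r) <= (N - 1)%:E)%E.
  case: (hlub r) => _; apply => e [y [hy ->]].
  rewrite leNgt; apply/negP => hlt; apply: hn; exists y; split => //; exact: ltW.
move=> h; have := le_trans hN h; rewrite lee_fin; lia.
Qed.

Definition Qb z K := exists r, pi r = z /\ Q r K.

Lemma Qb_of z N : Flevel wbar N z -> Qb z (2 * N - 2).
Proof.
have [r0 <-] := hsurj z => /LUB2 [y [hy hl]]; exists (r0 + y); split.
  by rewrite rmorphD (proj2 (hker y) hy) addr0.
by apply: Qmono (proj1 (PQ _ _) hl); lia.
Qed.

Lemma Qb_to z N : Qb z (2 * N) -> Flevel wbar N z.
Proof.
move=> [r [<- hr]]; have := proj2 (PQ _ _) hr; rewrite /Flevel => h.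
exact: le_trans h (wbar_ge r).
Qed.

Lemma Qb_sep z : (forall K, Qb z K) -> z = 0.
Proof.
have [r0 <-] := hsurj z => h; apply/hker; apply: hIc => N.
have [r [hr hq]] := h (2 * N); exists (r0 - r); split.
  by apply/hker; rewrite rmorphB hr subrr.
by rewrite opprB addrC subrK; apply/PQ.
Qed.

Lemma fconvb_uniq s L L' : fconv wbar s L -> fconv wbar s L' -> L = L'.
Proof.
move=> h1 h2; apply/eqP; rewrite -subr_eq0; apply/eqP; apply: Qb_sep => K.
have [c [hc0 hc]] := Qneg_ex.
pose N := `|K|%:Z + `|c|%:Z + 2.
have [n1 hn1] := h1 N; have [n2 hn2] := h2 N.
have [r1 [e1 q1]] := Qb_of (hn1 (maxn n1 n2) (leq_maxl _ _)).
have [r2 [e2 q2]] := Qb_of (hn2 (maxn n1 n2) (leq_maxr _ _)).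
exists (r2 + - r1); split.
  by rewrite rmorphD rmorphN e1 e2 opprB [LHS]addrC addrA subrK.
have q2' : Q r2 (2 * N - 2 + c) by apply: Qmono q2; lia.
apply: Qmono (Qadd q2' (hc _ _ q1)); lia.
Qed.

Lemma fsum_pi t : tinf t -> fsum wbar (fun n => pi (t n)) = pi (fsum w t).
Proof.
move=> ht; have hs := fsum_spec ht.
have hb : fconv wbar (fun N => \sum_(n < N) pi (t n)) (pi (fsum w t)).
  move=> N; have [n0 hn0] := hs N; exists n0 => n hn.
  rewrite -rmorph_sum -rmorphB; exact: le_trans (hn0 n hn) (wbar_ge _).
apply: (fconvb_uniq _ hb); rewrite /fsum; apply: epsilon_spec; by exists (pi (fsum w t)).
Qed.

Lemma skc_pi n i a : pi (skc sigma delta n i a) = skc sigmab deltab n i (pi a).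
Proof.
elim: n i => [|n IH] [|i] //=; rewrite ?rmorph0 //.
- by rewrite rmorphD rmorph0 -IH hdb.
- by rewrite rmorphD -!IH hsb hdb.
Qed.

Lemma lift z : exists r, pi r = z /\
  forall K, (K%:E <= wbar z + wbar z)%E -> Q r (K - 2).
Proof.
have [->|nz] := eqVneq z 0.
  by exists 0; split; [rewrite rmorph0 | move=> K _; exact: Q0].
have [r0 e0] := hsurj z.
move: (wbar_nfin z); case E: (wbar z) => [v||] // _.
- have hv : (v%:E <= wbar (pi r0))%E by rewrite e0 E.
  have [y [hy hl]] := LUB2 hv.
  exists (r0 + y); split; first by rewrite rmorphD (proj2 (hker y) hy) addr0 e0.
  move=> K; rewrite /= lee_fin => hK.
  by apply: Qmono (proj1 (PQ _ _) hl); lia.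
- exfalso; move/eqP: nz; apply; rewrite -e0; apply/hker; apply: hIc => N.
  have hv : ((N + 1)%:E <= wbar (pi r0))%E by rewrite e0 E leey.
  have [y [hy hl]] := LUB2 hv.
  exists (- y); split; first exact: IN.
  by rewrite opprK; move: hl; rewrite addrK.
Qed.

Lemma lub_shift r t (c : int) : ~ I r ->
  (forall y, I y -> exists y', I y' /\ (w (r + y) + c%:E <= w (t + y'))%E) ->
  (wbar (pi r) + c%:E <= wbar (pi t))%E.
Proof.
move=> nr h; move: (wbar_nfin (pi t)); case E: (wbar (pi t)) => [v||] // _; last first.
  by rewrite leey.
have hb : (wbar (pi r) <= (v - c)%:E)%E.
  case: (hlub r) => _; apply => e [y [hy ->]].
  have [y' [hy' hle]] := h y hy.
  have := le_trans hle (LUB1 t hy'); rewrite E; move: (wfin (r + y)).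
  case: (w (r + y)) => [u||] //=; rewrite ?lee_fin ?leey //; lia.
move: hb (wbar_nfin (pi r)); case: (wbar (pi r)) => [u||] //=; rewrite ?lee_fin //; lia.
Qed.

Lemma compat_bar : compatible wbar sigmab deltab.
Proof.
have nzI : forall r, pi r != 0 -> ~ I r.
  by move=> r nz hr; move: nz; rewrite (proj2 (hker r) hr) eqxx.
have nzy : forall r y, ~ I r -> I y -> r + y != 0.
  move=> r y nr hy; apply/negP => /eqP e; apply: nr.
  have -> : r = - y by rewrite -(addrK y r) e sub0r.
  exact: IN.
case: hcompat => [[c [hc0 hc]] [d [hd0 hd]]]; split.
  exists c; split => // z; have [r <-] := hsurj z => nz.
  rewrite hsb -rmorphB; apply: lub_shift; first exact: nzI.
  move=> y hy; exists (sigma y - y); split; first by apply: IB => //; apply: hIs.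
  have := hc _ (nzy _ _ (nzI _ nz) hy).
  by rewrite rmorphD opprD addrACA.
exists d; split => // z; have [r <-] := hsurj z => nz.
rewrite hdb; apply: lub_shift; first exact: nzI.
move=> y hy; exists (delta y); split; first exact: hId.
by have := hd _ (nzy _ _ (nzI _ nz) hy); rewrite raddfD.
Qed.

Lemma bQe (e : \bar int) (N : int) (i : nat) : e != -oo%E ->
  ((2 * N)%:E <= e + e + (i%:Z)%:E)%E -> ((2 * N - i%:Z)%:E <= e + e)%E.
Proof. by case: e => [u||] //= _; rewrite ?lee_fin ?leey //; lia. Qed.

Lemma iso_bar : skiso w sigma delta wbar sigmab deltab (sclosure w (IS_set w sigma delta I)).
Proof.
exists (fun f n => pi (f n)); split.
- move=> f hf N; have [n0 hn0] := hf N; exists n0 => n hn.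
  apply: le_trans (hn0 n hn) _; apply: leeD => //; apply: leeD; exact: wbar_ge.
- move=> g hg.
  pose P i r := pi r = g i /\ forall K, (K%:E <= wbar (g i) + wbar (g i))%E -> Q r (K - 2).
  pose f i := epsilon (inhabits 0) (P i).
  have hf : forall i, P i (f i) by move=> i; apply: epsilon_spec; exact: lift.
  exists f; split.
    apply/bseq_Q => K; have [n0 hn0] := hg (`|K|%:Z + 2).
    exists n0 => n hn; have := (hf n).2 _ (bQe (wbar_nfin _) (hn0 n hn)).
    by apply: Qmono; lia.
  by apply: functional_extensionality => i; case: (hf i).
split.
- by move=> f g _ _; apply: functional_extensionality => n; rewrite /skadd rmorphD.
- move=> f g hf hg; apply: functional_extensionality => k.
  rewrite /skmul rmorph_sum; apply: eq_bigr => m _.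
  rewrite -fsum_pi; last by apply: term_tinf; apply/bseq_Q.
  congr fsum; apply: functional_extensionality => n.
  by rewrite rmorphM skc_pi.
- by apply: functional_extensionality => k; rewrite /skone; case: (k == 0)%N; rewrite ?rmorph1 ?rmorph0.
- move=> f hf; split.
    move=> e; apply/Xchar; split => // i; apply/hker.
    by have := congr1 (fun h => h i) e.
  move=> /Xchar [_ hi]; apply: functional_extensionality => i.
  by apply/hker.
Qed.

End Filt.

Theorem lemma2p1p2 (R RI : pzRingType) (w : R -> \bar int)
  (sigma : {rmorphism R -> R}) (delta : {additive R -> R})
  (I : R -> Prop) (pi : {rmorphism R -> RI}) (wbar : RI -> \bar int)
  (sigmab deltab : RI -> RI) :
  (* (R, w): wcomplete, wseparated, Zariskian wfiltration *)
  wfiltration w -> wseparated w -> wcomplete w -> zariskian w ->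
  (* (sigma, delta) skew derivation compatible with w *)
  bijective sigma ->
  (forall a b, delta (a * b) = delta a * b + sigma a * delta b) ->
  compatible w sigma delta ->
  (* I closed ideal, sigma- and delta-stable *)
  ring_ideal I -> wclosed w I ->
  (forall a, I a -> I (sigma a)) -> (forall a, I a -> I (delta a)) ->
  (* RI = R/I with projection pi *)
  (forall z : RI, exists r : R, pi r = z) -> (forall r, pi r = 0 <-> I r) ->
  (* quotient wfiltration wbar(r + I) = sup { w(r + y) : y ∈ I } *)
  (forall r, is_lub (fun e => exists y, I y /\ e = w (r + y)) (wbar (pi r))) ->
  (* induced skew derivation *)
  (forall r, sigmab (pi r) = pi (sigma r)) ->
  (forall r, deltab (pi r) = pi (delta r)) ->
  compatible wbar sigmab deltab /\
  s_ideal w sigma delta (sclosure w (IS_set w sigma delta I)) /\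
  skiso w sigma delta wbar sigmab deltab (sclosure w (IS_set w sigma delta I)).
Proof.
move=> hw hsep hcomp _ _ _ hc hI hIc hIs hId hsurj hker hlub hsb hdb.
split; first exact: (compat_bar hw hc hI hIs hId hsurj hker hlub hsb hdb).
split; first exact: (X_ideal hw hsep hcomp hc hI hIc hIs hId).
exact: (iso_bar hw hsep hcomp hc hI hIc hsurj hker hlub hsb hdb).
Qed.
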